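(* Let $a,m\in\mathbb{Z}$ with $m\neq 0$, and let $s\ge 0$ and $m_s\ge 1$ be as defined in the context. Then $$a^{\varphi(m_s)+s}\equiv a^s \pmod{m}.$$
   Context: $\gcd$ denotes the greatest common divisor, always chosen positive, with the convention $\gcd(0,n)=n$ for $n>0$. $\varphi$ denotes Euler's totient function, and $a^0=1$. Since congruence modulo $m$ and modulo $-m$ coincide, the construction uses $|m|$. The sequences are defined as follows. - Put $d_0=\gcd(a,|m|)$ and $m_0=|m|/d_0$. - For $i\ge 1$, and only as long as $d_{i-1}\neq 1$, put $d_i=\gcd(d_{i-1},m_{i-1})$ and $m_i=m_{i-1}/d_i$. The index $s$ is the least index $i\ge 0$ with $d_i=1$, which exists. The number $m_s$ is the corresponding term of the sequence $(m_i)$. Equivalently, $s$ and $m_s$ are the output of the following algorithm: 1. Start with $A=a$, $M=|m|$, $i=0$. 2. Compute $d=\gcd(A,M)$ and $M'=M/d$. 3. If $d=1$, output $s=i$ and $m_s=M'$. Otherwise set $A=d$, $M=M'$, $i=i+1$, and repeat from step 2. *)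

(* Defs.v *)
From mathcomp Require Import all_boot all_order all_algebra.
Set Implicit Arguments. Unset Strict Implicit. Unset Printing Implicit Defensive.
Import GRing.Theory Num.Theory.

(* The recursion is continued for every i
   (the paper only defines it while d_{i-1} <> 1); it agrees with the paper's
   sequence on all indices where the latter is defined. *)
Fixpoint dm_seq (a m : int) (i : nat) : nat * nat :=
  match i with
  | 0 => let d := gcdn `|a|%N `|m|%N in (d, (`|m|%N %/ d)%N)
  | j.+1 => let: (dp, mp) := dm_seq a m j in
            let d := gcdn dp mp in (d, (mp %/ d)%N)
  end.

Definition d_seq (a m : int) (i : nat) : nat := (dm_seq a m i).1.
Definition m_seq (a m : int) (i : nat) : nat := (dm_seq a m i).2.

(* Main.v *)
Require Import Defs.
From mathcomp Require Import all_boot all_order all_algebra all_fingroup all_solvable.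
Import GRing.Theory Num.Theory.

Lemma PoszX' (r k : nat) : ((Posz r) ^+ k)%R = Posz (r ^ k).
Proof. by rewrite -!natz natrX. Qed.

Section Aux.
Variables a m : int.
Local Notation A := `|a|%N.
Local Notation n := `|m|%N.

Lemma d0E : d_seq a m 0 = gcdn A n. Proof. by []. Qed.
Lemma m0E : m_seq a m 0 = (n %/ d_seq a m 0)%N. Proof. by []. Qed.
Lemma dSE i : d_seq a m i.+1 = gcdn (d_seq a m i) (m_seq a m i).
Proof. by rewrite /d_seq /m_seq /=; case: dm_seq. Qed.
Lemma mSE i : m_seq a m i.+1 = (m_seq a m i %/ d_seq a m i.+1)%N.
Proof. by rewrite /d_seq /m_seq /=; case: dm_seq. Qed.

Lemma d_dvdA i : (d_seq a m i %| A)%N.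
Proof.
elim: i => [|i IH]; first by rewrite d0E dvdn_gcdl.
by rewrite dSE (dvdn_trans (dvdn_gcdl _ _) IH).
Qed.

Lemma n_split : n = (d_seq a m 0 * m_seq a m 0)%N.
Proof. by rewrite m0E d0E mulnC divnK // dvdn_gcdr. Qed.

Lemma m_split i : m_seq a m i = (d_seq a m i.+1 * m_seq a m i.+1)%N.
Proof. by rewrite mSE dSE mulnC divnK // dvdn_gcdr. Qed.

Lemma n_dvd i : (n %| A ^ i.+1 * m_seq a m i)%N.
Proof.
elim: i => [|i IH].
  by rewrite {1}n_split expn1 dvdn_mul // d_dvdA.
apply: (dvdn_trans IH).
rewrite (m_split i) mulnA dvdn_mul // [in X in (_ %| X)%N]expnS mulnC.
by rewrite dvdn_mul // d_dvdA.
Qed.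

Lemma m_dvd j i : (j <= i)%N -> (m_seq a m i %| m_seq a m j)%N.
Proof.
elim: i => [|i IH]; first by rewrite leqn0 => /eqP ->.
rewrite leq_eqVlt => /orP [/eqP -> //|]; rewrite ltnS => /IH H.
by apply: dvdn_trans H; rewrite (m_split i) dvdn_mull.
Qed.

Lemma m_dvd_n i : (m_seq a m i %| n)%N.
Proof. by rewrite (dvdn_trans (@m_dvd 0 i (leq0n i))) // [in X in (_ %| X)%N]n_split dvdn_mull. Qed.

Lemma g_dvd s i : (i <= s)%N -> (gcdn A (m_seq a m s) %| d_seq a m i)%N.
Proof.
elim: i => [|i IH] Hi.
  by rewrite d0E dvdn_gcd dvdn_gcdl (dvdn_trans (dvdn_gcdr _ _)) // m_dvd_n.
rewrite dSE dvdn_gcd IH ?(ltnW Hi) //=.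
by rewrite (dvdn_trans (dvdn_gcdr _ _)) // m_dvd // ltnW.
Qed.
End Aux.

Theorem mainTheorem5 (a m : int) (s : nat) :
  m != 0 ->
  d_seq a m s = 1%N ->
  (forall i : nat, (i < s)%N -> d_seq a m i <> 1%N) ->
  (a ^+ (totient (m_seq a m s) + s) = a ^+ s %[mod m])%Z.
Proof.
move=> m0 ds1 _.
set ms := m_seq a m s.
have cop : coprime `|a|%N ms.
  by rewrite /coprime -dvdn1 -ds1 g_dvd.
have nd : (`|m|%N %| `|a|%N ^ s * ms)%N.
  case: s ds1 @ms {cop} => [|k] ds1 /=.
    by rewrite expn0 mul1n {1}(n_split a m) ds1 mul1n.
  by rewrite -[m_seq a m k.+1]mul1n -ds1 -m_split n_dvd.
have msd : (Posz ms %| (a ^+ totient ms - 1)%R)%Z.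
  have ms0 : (0 < ms)%N.
    by apply: dvdn_gt0 (m_dvd_n a m s); rewrite absz_gt0.
  rewrite -eqz_mod_dvd -modzXm.
  have rE : (a %% ms)%Z = Posz `|(a %% ms)%Z|%N.
    by rewrite gez0_abs // modz_ge0 // -lt0n.
  have copr : coprime `|(a %% ms)%Z|%N ms.
    have h : coprimez a ms by rewrite coprimezE.
    by move: h; rewrite /coprimez -gcdz_modl -/(coprimez _ _) coprimezE.
  rewrite rE PoszX' !modz_nat (Euler_exp_totient copr).
  by [].
apply/eqP; rewrite eqz_mod_dvd exprD mulrC -{2}[(a ^+ s)%R]mulr1 -mulrBr.
rewrite dvdzE abszM abszX.
move: msd; rewrite dvdzE => /dvdnP [k ->].
by rewrite /= mulnCA dvdn_mull.
Qed.
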